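(* Let $F$ be a field of characteristic not 2 or 3, and consider the split cube space $V=F^2\otimes F^2\otimes F^2$ with the action of $\tilde M(F)=(GL_2(F)^3)^0\rtimes S_3$. Let $v_0=u_1\otimes u_1\otimes u_1-u_2\otimes u_2\otimes u_2$ (the distinguished cube $(a,e,f,b)=(1,0,0,-1)$). Then \[\mathrm{Stab}_{(GL_2^3)^0}(v_0)=\Big\{\big(\mathrm{diag}(t_1,t_1^{-1}),\mathrm{diag}(t_2,t_2^{-1}),\mathrm{diag}(t_3,t_3^{-1})\big):t_1t_2t_3=1\Big\}\rtimes\{1,(w,w,w)\},\quad w=\begin{pmatrix}0&1\\1&0\end{pmatrix},\] so $\mathrm{Stab}_{M}(v_0)\cong\mathbb G_m^2\rtimes\mathbb Z/2\mathbb Z$, and $\mathrm{Stab}_{\tilde M}(v_0)=\mathrm{Stab}_M(v_0)\rtimes S_3$. This group coincides, as a subgroup of $(GL_2^3)^0\rtimes S_3=GL_2(F^3)^0\rtimes S_3$, with the $F$-automorphism group $\mathrm{Aut}_F(F^3,C_0,Q_0,\beta_0)$ of the split twisted composition algebra.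
   Context: $u_1=(1,0)^T$, $u_2=(0,1)^T$. Cube coordinates $(a,e,f,b)$, $e=(e_1,e_2,e_3)$, $f=(f_1,f_2,f_3)$: $a$ is the coefficient of $u_1^{\otimes3}$, $b$ of $u_2^{\otimes3}$, $e_i$ of the basis vector with $u_2$ in the $i$-th factor and $u_1$ elsewhere, $f_i$ of the basis vector with $u_1$ in the $i$-th factor and $u_2$ elsewhere. $(GL_2^3)^0$ is the group of triples $(g_1,g_2,g_3)$ of invertible $2\times2$ matrices with common determinant $d$; it acts on $V$ by $d^{-1}g_1\otimes g_2\otimes g_3$, and $S_3$ acts by permuting the tensor factors. The split twisted composition algebra $C_0$ is $E^2$ with $E=F^3$, $Q_0(x,y)=xy\in E$, $\beta_0(x,y)=(y^\#,x^\#)$ where $(x_1,x_2,x_3)^\#=(x_2x_3,x_3x_1,x_1x_2)$; its $F$-automorphisms are pairs $(\phi,\sigma)$, $\sigma\in S_3=\mathrm{Aut}(F^3)$, $\phi$ an $F$-linear bijection of $E^2$ with $\phi(av)=\sigma(a)\phi(v)$, $\sigma\circ Q_0=Q_0\circ\phi$, $\phi\circ\beta_0=\beta_0\circ\phi$; writing $\phi$ as an element of $GL_2(E)=GL_2(F)^3$ composed with $\sigma$ acting coordinatewise embeds this group into $GL_2(F^3)\rtimes S_3$. *)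

(* Defs.v *)
From HB Require Import structures.
From mathcomp Require Import all_boot all_order all_algebra all_fingroup.
Set Implicit Arguments. Unset Strict Implicit. Unset Printing Implicit Defensive.
Import GRing.Theory.
Local Open Scope ring_scope.

Section Defs.
Variable F : fieldType.

Definition u1 : 'I_2 := ord0.
Definition u2 : 'I_2 := ord_max.

(* A basis vector of V = F^2 (x) F^2 (x) F^2 is indexed by a function
   'I_3 -> 'I_2 (which basis vector sits in each tensor factor). *)
Definition idx := {ffun 'I_3 -> 'I_2}.
Definition cube := {ffun idx -> F}.

(* (GL_2^3)^0 : triples of invertible matrices with a common determinant. *)
Definition inM0 (g : 'I_3 -> 'M[F]_2) : Prop :=
  (forall i, g i \in unitmx) /\ (forall i j, \det (g i) = \det (g j)).

Definition cube_gact (g : 'I_3 -> 'M[F]_2) (v : cube) : cube :=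
  [ffun x : idx => (\det (g ord0))^-1 *
     \sum_(y : idx) (\prod_(i < 3) g i (x i) (y i)) * v y].

Definition cube_sact (s : 'S_3) (v : cube) : cube :=
  [ffun x : idx => v [ffun i => x (s i)]].

Definition cube_tact (g : 'I_3 -> 'M[F]_2) (s : 'S_3) (v : cube) : cube :=
  cube_gact g (cube_sact s v).

Definition v0 : cube :=
  [ffun x : idx => if x == [ffun _ => u1] then 1
                   else if x == [ffun _ => u2] then -1 else 0].

Definition dmat (t : F) : 'M[F]_2 :=
  \matrix_(i < 2, j < 2) (if i == j then (if i == u1 then t else t^-1) else 0).
Definition wmat : 'M[F]_2 := \matrix_(i < 2, j < 2) (if i == j then 0 else 1).

Definition E := {ffun 'I_3 -> F}.
Definition C0 := (E * E)%type.

Definition emul (a b : E) : E := [ffun i => a i * b i].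
Definition sharp (x : E) : E := [ffun i => \prod_(j < 3 | j != i) x j].
Definition cadd (u v : C0) : C0 := ([ffun i => u.1 i + v.1 i], [ffun i => u.2 i + v.2 i]).
Definition cscale (c : F) (u : C0) : C0 := ([ffun i => c * u.1 i], [ffun i => c * u.2 i]).
Definition emulC (a : E) (u : C0) : C0 := (emul a u.1, emul a u.2).
Definition Q0 (u : C0) : E := emul u.1 u.2.
Definition beta0 (u : C0) : C0 := (sharp u.2, sharp u.1).
Definition sE (s : 'S_3) (a : E) : E := [ffun i => a ((s^-1)%g i)].

Definition is_aut (phi : C0 -> C0) (s : 'S_3) : Prop :=
  [/\ (forall c u v, phi (cadd (cscale c u) v) = cadd (cscale c (phi u)) (phi v)),
      bijective phi,
      (forall (a : E) u, phi (emulC a u) = emulC (sE s a) (phi u)),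
      (forall u, Q0 (phi u) = sE s (Q0 u))
    & (forall u, phi (beta0 u) = beta0 (phi u))].

(* the embedding: h in GL_2(E) = GL_2(F)^3 composed with s acting coordinatewise *)
Definition embed (h : 'I_3 -> 'M[F]_2) (s : 'S_3) (u : C0) : C0 :=
  let x := sE s u.1 in let y := sE s u.2 in
  ([ffun i => h i u1 u1 * x i + h i u1 u2 * y i],
   [ffun i => h i u2 u1 * x i + h i u2 u2 * y i]).

End Defs.

(* Main.v *)
Require Import Defs.
From HB Require Import structures.
From mathcomp Require Import all_boot all_order all_algebra all_fingroup.
From mathcomp Require Import ring.
Import GRing.Theory.
Local Open Scope ring_scope.
Set Implicit Arguments. Unset Strict Implicit. Unset Printing Implicit Defensive.
Definition bo (b : bool) : 'I_2 := if b then u2 else u1.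
Definition ix (b0 b1 b2 : bool) : idx := [ffun i : 'I_3 => if (i == 0%N :> nat) then bo b0 else if (i == 1%N :> nat) then bo b1 else bo b2].
Lemma eq_const (x : idx) c : (x == [ffun _ => c]) = [&& x ord0 == c, x (Ordinal (isT : 1 < 3)%N) == c & x (Ordinal (isT : 2 < 3)%N) == c].
Proof.
apply/eqP/and3P => [->|[/eqP h0 /eqP h1 /eqP h2]]; first by rewrite !ffunE.
apply/ffunP => -[[|[|[|]]] Hi] //; rewrite ffunE; [rewrite -h0|rewrite -h1|rewrite -h2]; congr (x _); exact: val_inj.
Qed.
Lemma v0ix (F : fieldType) b0 b1 b2 : v0 F (ix b0 b1 b2) = if b0 && b1 && b2 then -1 else if ~~ b0 && ~~ b1 && ~~ b2 then 1 else 0.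
Proof. rewrite /v0 ffunE !eq_const !ffunE /=. by case: b0; case: b1; case: b2. Qed.
Lemma idx_ix (x : idx) : x = ix (x ord0 == u2) (x (Ordinal (isT : 1 < 3)%N) == u2) (x (Ordinal (isT : 2 < 3)%N) == u2).
Proof.
have E (j : 'I_2) : bo (j == u2) = j by rewrite /bo; case: eqP => // /eqP; case: j => [[|[|]]] //= *; exact: val_inj.
apply/ffunP => -[[|[|[|]]] Hi] //; rewrite ffunE /= E; congr (x _); exact: val_inj.
Qed.

Lemma sum_v0 (F : fieldType) (G : idx -> F) :
  \sum_(y : idx) G y * v0 F y = G [ffun _ => u1] - G [ffun _ => u2].
Proof.
rewrite (bigD1 [ffun _ => u1]) //= (bigD1 [ffun _ => u2]) /=; last first.
  by apply/eqP => /ffunP /(_ ord0); rewrite !ffunE.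
rewrite big1 ?addr0.
  rewrite /v0 !ffunE eqxx.
  have -> : ([ffun=> u2] == [ffun=> u1] :> idx) = false by apply/eqP => /ffunP /(_ ord0); rewrite !ffunE.
  by rewrite eqxx mulr1 mulrN1.
move=> y /andP [h1 h2]; rewrite /v0 ffunE (negbTE h1) (negbTE h2) mulr0 //.
Qed.

Definition P3 (F : fieldType) (g : 'I_3 -> 'M[F]_2) (x : idx) (k : 'I_2) :=
  g ord0 (x ord0) k * g (Ordinal (isT : 1 < 3)%N) (x (Ordinal (isT : 1 < 3)%N)) k * g (Ordinal (isT : 2 < 3)%N) (x (Ordinal (isT : 2 < 3)%N)) k.

Lemma gact_v0 (F : fieldType) (g : 'I_3 -> 'M[F]_2) x :
  cube_gact g (v0 F) x = (\det (g ord0))^-1 * (P3 g x u1 - P3 g x u2).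
Proof.
rewrite /cube_gact ffunE sum_v0 /P3 !big_ord_recr !big_ord0 /= !mul1r !ffunE.
congr (_ * (_ * _ * _ - _ * _ * _)); repeat f_equal; exact: val_inj.
Qed.
Lemma solve2 (F : fieldType) (al be ga de A B r s D : F) :
  al * A - be * B = r -> ga * A - de * B = s -> al * de - be * ga = D -> D != 0 ->
  A = (de * r - be * s) / D /\ B = (ga * r - al * s) / D.
Proof.
move=> e1 e2 e3 hD; split; apply: (mulIf hD); rewrite mulfVK //; rewrite -e1 -e2 -e3; ring.
Qed.

Lemma zr (F : fieldType) (x y : F) : x != 0 -> x * y = 0 -> y = 0.
Proof. by move=> hx /eqP; rewrite mulf_eq0 (negbTE hx) => /eqP. Qed.
Lemma zl (F : fieldType) (x y : F) : y != 0 -> x * y = 0 -> x = 0.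
Proof. by move=> hy /eqP; rewrite mulf_eq0 (negbTE hy) orbF => /eqP. Qed.
Lemma invE (F : fieldType) (x y : F) : x * y = 1 -> y = x^-1.
Proof.
move=> h; have hx : x != 0.
  by apply/eqP => x0; move: h; rewrite x0 mul0r => /eqP; rewrite eq_sym oner_eq0.
by rewrite -[y]mul1r -(mulVf hx) -mulrA h mulr1.
Qed.
Lemma nz (F : fieldType) (x y : F) : x * y != 0 -> x != 0 /\ y != 0.
Proof. by rewrite mulf_eq0 negb_or => /andP. Qed.

Lemma core (F : fieldType) (a1 b1 c1 e1 a2 b2 c2 e2 a3 b3 c3 e3 D : F) :
  D != 0 ->
  a1 * e1 - b1 * c1 = D -> a2 * e2 - b2 * c2 = D -> a3 * e3 - b3 * c3 = D ->
  a1*a2*a3 - b1*b2*b3 = D ->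
  c1*a2*a3 - e1*b2*b3 = 0 ->
  a1*c2*a3 - b1*e2*b3 = 0 ->
  a1*a2*c3 - b1*b2*e3 = 0 ->
  c1*c2*a3 - e1*e2*b3 = 0 ->
  c1*a2*c3 - e1*b2*e3 = 0 ->
  a1*c2*c3 - b1*e2*e3 = 0 ->
  c1*c2*c3 - e1*e2*e3 = - D ->
  (b1 = 0 /\ b2 = 0 /\ b3 = 0 /\ c1 = 0 /\ c2 = 0 /\ c3 = 0 /\ a1 * a2 * a3 = 1 /\
     e1 = a1^-1 /\ e2 = a2^-1 /\ e3 = a3^-1) \/
  (a1 = 0 /\ a2 = 0 /\ a3 = 0 /\ e1 = 0 /\ e2 = 0 /\ e3 = 0 /\ b1 * b2 * b3 = 1 /\
     c1 = b1^-1 /\ c2 = b2^-1 /\ c3 = b3^-1).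
Proof.
move=> hD d1 d2 d3 E000 E100 E010 E001 E110 E101 E011 E111.
have [f1 f2] : a2 * a3 = (e1 * D - b1 * 0) / D /\ b2 * b3 = (c1 * D - a1 * 0) / D.
  apply: solve2 d1 hD; [rewrite -E000 | rewrite -E100]; ring.
have [f3 f4] : c2 * a3 = (e1 * 0 - b1 * 0) / D /\ e2 * b3 = (c1 * 0 - a1 * 0) / D.
  apply: solve2 d1 hD; [rewrite -E010 | rewrite -E110]; ring.
have [f5 f6] : a2 * c3 = (e1 * 0 - b1 * 0) / D /\ b2 * e3 = (c1 * 0 - a1 * 0) / D.
  apply: solve2 d1 hD; [rewrite -E001 | rewrite -E101]; ring.
have [f7 f8] : c2 * c3 = (e1 * 0 - b1 * - D) / D /\ e2 * e3 = (c1 * 0 - a1 * - D) / D.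
  apply: solve2 d1 hD; [rewrite -E011 | rewrite -E111]; ring.
have [g1 g2] : a1 * a3 = (e2 * D - b2 * 0) / D /\ b1 * b3 = (c2 * D - a2 * 0) / D.
  apply: solve2 d2 hD; [rewrite -E000 | rewrite -E010]; ring.
have [g3 g4] : c1 * a3 = (e2 * 0 - b2 * 0) / D /\ e1 * b3 = (c2 * 0 - a2 * 0) / D.
  apply: solve2 d2 hD; [rewrite -E100 | rewrite -E110]; ring.
have [g5 g6] : a1 * c3 = (e2 * 0 - b2 * 0) / D /\ b1 * e3 = (c2 * 0 - a2 * 0) / D.
  apply: solve2 d2 hD; [rewrite -E001 | rewrite -E011]; ring.
have [g7 g8] : c1 * c3 = (e2 * 0 - b2 * - D) / D /\ e1 * e3 = (c2 * 0 - a2 * - D) / D.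
  apply: solve2 d2 hD; [rewrite -E101 | rewrite -E111]; ring.
have [h1 h2] : a1 * a2 = (e3 * D - b3 * 0) / D /\ b1 * b2 = (c3 * D - a3 * 0) / D.
  apply: solve2 d3 hD; [rewrite -E000 | rewrite -E001]; ring.
have [h3 h4] : c1 * a2 = (e3 * 0 - b3 * 0) / D /\ e1 * b2 = (c3 * 0 - a3 * 0) / D.
  apply: solve2 d3 hD; [rewrite -E100 | rewrite -E101]; ring.
have [h5 h6] : a1 * c2 = (e3 * 0 - b3 * 0) / D /\ b1 * e2 = (c3 * 0 - a3 * 0) / D.
  apply: solve2 d3 hD; [rewrite -E010 | rewrite -E011]; ring.
have [h7 h8] : c1 * c2 = (e3 * 0 - b3 * - D) / D /\ e1 * e2 = (c3 * 0 - a3 * - D) / D.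
  apply: solve2 d3 hD; [rewrite -E110 | rewrite -E111]; ring.
move: f1 f2 f3 f4 f5 f6 f7 f8 g1 g2 g3 g4 g5 g6 g7 g8 h1 h2 h3 h4 h5 h6 h7 h8.
rewrite !(mulr0, subr0, mul0r, mulrN, opprK, mulfK hD, sub0r) => f1 f2 f3 f4 f5 f6 f7 f8 g1 g2 g3 g4 g5 g6 g7 g8 h1 h2 h3 h4 h5 h6 h7 h8.
have [ha1|ha1] := eqVneq a1 0.
  right.
  have : b1 * c1 != 0 by apply/eqP => h; move: hD; rewrite -d1 ha1 h mul0r subrr eqxx.
  move=> /nz [hb1 hc1].
  have [hc2 hc3] : c2 != 0 /\ c3 != 0 by apply: nz; rewrite f7.
  have [hb2 hb3] : b2 != 0 /\ b3 != 0 by apply: nz; rewrite f2.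
  have a3z := zr hc2 f3. have a2z := zr hc1 h3.
  have e1z := zl hb2 h4. have e2z := zr hb1 h6. have e3z := zr hb1 g6.
  have p : b1 * b2 * b3 = 1.
    apply: (mulfI hb1); rewrite mulr1 -{3}f7 -g2 -h2; ring.
  do 7 (split; first by []).
  split; [|split]; apply: invE; [rewrite -f2 | rewrite -g2 | rewrite -h2]; rewrite -p; ring.
left.
have c3z := zr ha1 g5. have c2z := zr ha1 h5.
have : a2 * e2 != 0 by apply/eqP => h; move: hD; rewrite -d2 c2z h mulr0 subrr eqxx.
move=> /nz [ha2 he2].
have : a3 * e3 != 0 by apply/eqP => h; move: hD; rewrite -d3 c3z h mulr0 subrr eqxx.
move=> /nz [ha3 he3].
have c1z := zl ha2 h3. have b2z := zl he3 f6. have b3z := zr he2 f4. have b1z := zl he2 h6.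
have p : a1 * a2 * a3 = 1.
  apply: (mulfI ha1); rewrite mulr1 -{3}f8 -g1 -h1; ring.
do 6 (split; first by []).
split; first by [].
split; [|split]; apply: invE; [rewrite -f1 | rewrite -g1 | rewrite -h1]; rewrite -p; ring.
Qed.
Lemma det2 (F : fieldType) (M : 'M[F]_2) : \det M = M u1 u1 * M u2 u2 - M u1 u2 * M u2 u1.
Proof.
rewrite (expand_det_row _ ord0) !big_ord_recr big_ord0 /= add0r /cofactor !det_mx11 !mxE /=.
rewrite expr0 expr1 mul1r mulN1r mulrN. congr (_ * _ - _ * _); congr (M _ _); exact: val_inj.
Qed.

Definition o1 : 'I_3 := Ordinal (isT : 1 < 3)%N.
Definition o2 : 'I_3 := Ordinal (isT : 2 < 3)%N.

Lemma I2cases (r : 'I_2) : r = u1 \/ r = u2.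
Proof. case: r => [[|[|]]] Hr //; [left|right]; exact: val_inj. Qed.
Lemma I3cases (i : 'I_3) : [\/ i = ord0, i = o1 | i = o2].
Proof. case: i => [[|[|[|]]]] Hi //; [apply: Or31|apply: Or32|apply: Or33]; exact: val_inj. Qed.

Lemma u12 : (u1 == u2) = false. Proof. by []. Qed.
Lemma u21 : (u2 == u1) = false. Proof. by []. Qed.

Lemma mx2_eq (F : fieldType) (M N : 'M[F]_2) :
  M u1 u1 = N u1 u1 -> M u1 u2 = N u1 u2 -> M u2 u1 = N u2 u1 -> M u2 u2 = N u2 u2 -> M = N.
Proof.
move=> h1 h2 h3 h4; apply/matrixP => r c.
by case: (I2cases r) => ->; case: (I2cases c) => ->.
Qed.

Lemma mulmx2E (F : fieldType) (M N : 'M[F]_2) r c :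
  (M *m N) r c = M r u1 * N u1 c + M r u2 * N u2 c.
Proof.
rewrite mxE !big_ord_recr big_ord0 /= add0r; congr (M _ _ * N _ _ + M _ _ * N _ _); exact: val_inj.
Qed.

Lemma dmatE (F : fieldType) (t : F) :
  [/\ dmat t u1 u1 = t, dmat t u1 u2 = 0, dmat t u2 u1 = 0 & dmat t u2 u2 = t^-1].
Proof. by rewrite !mxE. Qed.
Lemma wmatE (F : fieldType) :
  [/\ wmat F u1 u1 = 0, wmat F u1 u2 = 1, wmat F u2 u1 = 1 & wmat F u2 u2 = 0].
Proof. by rewrite !mxE. Qed.
Lemma onemxE (F : fieldType) :
  [/\ (1%:M : 'M[F]_2) u1 u1 = 1, (1%:M : 'M[F]_2) u1 u2 = 0, (1%:M : 'M[F]_2) u2 u1 = 0 & (1%:M : 'M[F]_2) u2 u2 = 1].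
Proof. by rewrite !mxE. Qed.

Lemma gmE (F : fieldType) (t : F) (e : bool) :
  let M := dmat t *m (if e then wmat F else 1%:M) in
  [/\ M u1 u1 = if e then 0 else t, M u1 u2 = if e then t else 0,
      M u2 u1 = if e then t^-1 else 0 & M u2 u2 = if e then 0 else t^-1].
Proof.
rewrite /= !mulmx2E; case: (dmatE t) => -> -> -> ->.
case: e; [case: (wmatE F) => -> -> -> -> | case: (onemxE F) => -> -> -> ->].
  by rewrite !(mulr0, mul0r, mulr1, add0r, addr0).
by rewrite !(mulr0, mul0r, mulr1, add0r, addr0).
Qed.

Lemma P3ix (F : fieldType) (g : 'I_3 -> 'M[F]_2) b0 b1 b2 k :
  P3 g (ix b0 b1 b2) k = g ord0 (bo b0) k * g o1 (bo b1) k * g o2 (bo b2) k.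
Proof. by rewrite /P3 !ffunE. Qed.

Lemma stab_eqs (F : fieldType) (g : 'I_3 -> 'M[F]_2) : \det (g ord0) != 0 ->
  (cube_gact g (v0 F) = v0 F <-> forall b0 b1 b2,
     P3 g (ix b0 b1 b2) u1 - P3 g (ix b0 b1 b2) u2 = \det (g ord0) * v0 F (ix b0 b1 b2)).
Proof.
move=> hD; split.
  move=> h b0 b1 b2; rewrite -h gact_v0 mulrA divff // mul1r //.
move=> h; apply/ffunP => x; rewrite (idx_ix x) gact_v0 h mulrA mulVf // mul1r //.
Qed.

Lemma part1 (F : fieldType) (g : 'I_3 -> 'M[F]_2) :
  (inM0 g /\ cube_gact g (v0 F) = v0 F) <->
  (exists t : 'I_3 -> F, exists e : bool,
      \prod_(i < 3) t i = 1 /\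
      forall i, g i = dmat (t i) *m (if e then wmat F else 1%:M)).
Proof.
have P (t : 'I_3 -> F) : \prod_(i < 3) t i = t ord0 * t o1 * t o2.
  by rewrite !big_ord_recr big_ord0 /= mul1r; congr (t _ * t _ * t _); apply: val_inj.
split.
  move=> [[hu hd] hs].
  have hD : \det (g ord0) != 0 by rewrite -unitfE -unitmxE.
  move/(stab_eqs hD): hs => E.
  have E000 := E false false false. have E100 := E true false false.
  have E010 := E false true false. have E001 := E false false true.
  have E110 := E true true false. have E101 := E true false true.
  have E011 := E false true true. have E111 := E true true true.
  move: E000 E100 E010 E001 E110 E101 E011 E111.
  rewrite !P3ix !v0ix /= !(mulr1, mulr0, mulrN1) => E000 E100 E010 E001 E110 E101 E011 E111.
  have d1 := det2 (g ord0). have d2 := det2 (g o1). have d3 := det2 (g o2).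
  rewrite (hd o1 ord0) in d2; rewrite (hd o2 ord0) in d3.
  have [[b1 [b2 [b3 [c1 [c2 [c3 [p [e1 [e2 e3]]]]]]]]]|[a1 [a2 [a3 [e1 [e2 [e3 [p [c1 [c2 c3]]]]]]]]]] :=
    core hD (esym d1) (esym d2) (esym d3) E000 E100 E010 E001 E110 E101 E011 E111.
  - exists (fun i => g i u1 u1), false; split.
      by rewrite P -p; congr (_ * g _ _ _ * g _ _ _); apply: val_inj.
    move=> i; case: (gmE (g i u1 u1) false) => /= h1 h2 h3 h4; apply: mx2_eq; rewrite ?h1 ?h2 ?h3 ?h4;
    by case: (I3cases i) => ->; rewrite /o1 /o2 ?(b1, b2, b3, c1, c2, c3, e1, e2, e3) //; congr (g _ _ _)^-1; apply: val_inj.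
  - exists (fun i => g i u1 u2), true; split.
      by rewrite P -p; congr (_ * g _ _ _ * g _ _ _); apply: val_inj.
    move=> i; case: (gmE (g i u1 u2) true) => /= h1 h2 h3 h4; apply: mx2_eq; rewrite ?h1 ?h2 ?h3 ?h4;
    by case: (I3cases i) => ->; rewrite /o1 /o2 ?(a1, a2, a3, c1, c2, c3, e1, e2, e3) //; congr (g _ _ _)^-1; apply: val_inj.
move=> [t [e [p hg]]].
rewrite P in p.
have [ht0 ht1 ht2] : [/\ t ord0 != 0, t o1 != 0 & t o2 != 0].
  have : t ord0 * t o1 * t o2 != 0 by rewrite p oner_neq0.
  by move=> /nz [/nz [-> ->] ->].
have htn i : t i != 0 by case: (I3cases i) => ->.
have hdet i : \det (g i) = if e then -1 else 1.
  rewrite hg det_mulmx det2; case: (dmatE (t i)) => -> -> -> ->.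
  rewrite mulr0 subr0 divff //; case: (e); last by rewrite det1 mul1r.
  by rewrite det2; case: (wmatE F) => -> -> -> ->; rewrite mul0r mulr1 sub0r mul1r.
have hD : \det (g ord0) != 0 by rewrite hdet; case: (e); rewrite ?oppr_eq0 oner_neq0.
split; first split.
- by move=> i; rewrite unitmxE unitfE hdet -(hdet ord0).
- by move=> i j; rewrite !hdet.
apply/(stab_eqs hD) => b0 b1 b2; rewrite !P3ix v0ix hdet !hg.
case: (gmE (t ord0) e) => /= a1 b1' c1 d1.
case: (gmE (t o1) e) => /= a2 b2' c2 d2.
case: (gmE (t o2) e) => /= a3 b3' c3 d3.
have pi : (t ord0)^-1 * (t o1)^-1 * (t o2)^-1 = 1 by rewrite -!invfM p invr1.
case: b0; case: b1; case: b2 => /=; rewrite ?a1 ?b1' ?c1 ?d1 ?a2 ?b2' ?c2 ?d2 ?a3 ?b3' ?c3 ?d3;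
case: (e); rewrite ?(mulr0, mul0r, subr0, sub0r, mulr1, mulrN1, mulN1r, opprK, oppr0, p, pi) //.
Qed.

Lemma permeq (s : 'S_3) (k i : 'I_3) : (s k == i) = (k == (s^-1)%g i).
Proof. by apply/eqP/eqP => [<-|->]; rewrite ?permK ?permKV. Qed.

Lemma sact_v0 (F : fieldType) (s : 'S_3) : cube_sact s (v0 F) = v0 F.
Proof.
have key (x : idx) c : ([ffun i => x (s i)] == [ffun _ => c] :> idx) = (x == [ffun _ => c]).
  apply/eqP/eqP => [/ffunP h|->]; last by apply/ffunP => i; rewrite !ffunE.
  apply/ffunP => j; have := h ((s^-1)%g j); rewrite !ffunE permKV //.
by apply/ffunP => x; rewrite /cube_sact /v0 !ffunE !key.
Qed.

Lemma part2 (F : fieldType) (g : 'I_3 -> 'M[F]_2) (s : 'S_3) :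
  (inM0 g /\ cube_tact g s (v0 F) = v0 F) <-> (inM0 g /\ cube_gact g (v0 F) = v0 F).
Proof. by rewrite /cube_tact sact_v0. Qed.

Lemma prodE (F : fieldType) (x : 'I_3 -> F) :
  [/\ \prod_(j < 3 | j != ord0) x j = x o1 * x o2, \prod_(j < 3 | j != o1) x j = x ord0 * x o2
    & \prod_(j < 3 | j != o2) x j = x ord0 * x o1].
Proof.
split; rewrite big_mkcond !big_ord_recr big_ord0 /= mul1r;
rewrite ?mul1r ?mulr1; congr (x _ * x _); by apply: val_inj.
Qed.

Lemma sharpE (F : fieldType) (x : E F) :
  [/\ sharp x ord0 = x o1 * x o2, sharp x o1 = x ord0 * x o2 & sharp x o2 = x ord0 * x o1].
Proof.
rewrite /sharp !ffunE; split; rewrite big_mkcond !big_ord_recr big_ord0 /= mul1r;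
rewrite ?mul1r ?mulr1; congr (x _ * x _); by apply: val_inj.
Qed.
Lemma core2 (F : fieldType) (a1 b1 c1 e1 a2 b2 c2 e2 a3 b3 c3 e3 : F) :
  a1 * c1 = 0 -> a2 * c2 = 0 -> a3 * c3 = 0 ->
  b1 * e1 = 0 -> b2 * e2 = 0 -> b3 * e3 = 0 ->
  a1 * e1 + b1 * c1 = 1 -> a2 * e2 + b2 * c2 = 1 -> a3 * e3 + b3 * c3 = 1 ->
  b1 = c2 * c3 -> b2 = c1 * c3 -> b3 = c1 * c2 ->
  e1 = a2 * a3 -> e2 = a1 * a3 -> e3 = a1 * a2 ->
  a1 = e2 * e3 -> a2 = e1 * e3 -> a3 = e1 * e2 ->
  c1 = b2 * b3 -> c2 = b1 * b3 -> c3 = b1 * b2 ->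
  (b1 = 0 /\ b2 = 0 /\ b3 = 0 /\ c1 = 0 /\ c2 = 0 /\ c3 = 0 /\ a1 * a2 * a3 = 1 /\
     e1 = a1^-1 /\ e2 = a2^-1 /\ e3 = a3^-1) \/
  (a1 = 0 /\ a2 = 0 /\ a3 = 0 /\ e1 = 0 /\ e2 = 0 /\ e3 = 0 /\ b1 * b2 * b3 = 1 /\
     c1 = b1^-1 /\ c2 = b2^-1 /\ c3 = b3^-1).
Proof.
move=> z1 z2 z3 y1 y2 y3 o1 o2 o3 B1 B2 B3 E1 E2 E3 A1 A2 A3 C1 C2 C3.
have [ha1|ha1] := eqVneq a1 0.
  right.
  have q1 : b1 * c1 = 1 by rewrite -o1 ha1 mul0r add0r.
  have : b1 * c1 != 0 by rewrite q1 oner_neq0.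
  move=> /nz [hb1 hc1].
  have [hc2 hc3] : c2 != 0 /\ c3 != 0 by apply: nz; rewrite -B1.
  have [hb2 hb3] : b2 != 0 /\ b3 != 0 by apply: nz; rewrite -C1.
  have a2z := zl hc2 z2. have a3z := zl hc3 z3. 
  have e1z := zr hb1 y1. have e2z := zr hb2 y2. have e3z := zr hb3 y3.
  have q2 : b2 * c2 = 1 by rewrite -o2 a2z mul0r add0r.
  have q3 : b3 * c3 = 1 by rewrite -o3 a3z mul0r add0r.
  have p : b1 * b2 * b3 = 1 by rewrite -q1 C1 mulrA.
  do 7 (split; first by []).
  by split; [|split]; apply: invE.
left.
have c1z := zr ha1 z1.
have q1 : a1 * e1 = 1 by rewrite -o1 c1z mulr0 addr0.
have he1 : e1 != 0 by apply/eqP => h; move: q1; rewrite h mulr0 => /eqP; rewrite eq_sym oner_eq0.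
have b1z := zl he1 y1.
have [ha2 ha3] : a2 != 0 /\ a3 != 0 by apply: nz; rewrite -E1.
have c2z := zr ha2 z2. have c3z := zr ha3 z3.
have q2 : a2 * e2 = 1 by rewrite -o2 c2z mulr0 addr0.
have q3 : a3 * e3 = 1 by rewrite -o3 c3z mulr0 addr0.
have he2 : e2 != 0 by apply/eqP => h; move: q2; rewrite h mulr0 => /eqP; rewrite eq_sym oner_eq0.
have he3 : e3 != 0 by apply/eqP => h; move: q3; rewrite h mulr0 => /eqP; rewrite eq_sym oner_eq0.
have b2z := zl he2 y2. have b3z := zl he3 y3.
have p : a1 * a2 * a3 = 1 by rewrite -q1 E1 mulrA.
do 7 (split; first by []).
by split; [|split]; apply: invE.
Qed.

Lemma sEK (F : fieldType) (s : 'S_3) (a : E F) : sE (s^-1)%g (sE s a) = a.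
Proof. by apply/ffunP => i; rewrite !ffunE invgK permK. Qed.
Lemma sKE (F : fieldType) (s : 'S_3) (a : E F) : sE s (sE (s^-1)%g a) = a.
Proof. by apply/ffunP => i; rewrite !ffunE invgK permKV. Qed.
Lemma sE_emul (F : fieldType) (s : 'S_3) (a b : E F) : sE s (emul a b) = emul (sE s a) (sE s b).
Proof. by apply/ffunP => i; rewrite !ffunE. Qed.
Lemma sE_sharp (F : fieldType) (s : 'S_3) (a : E F) : sE s (sharp a) = sharp (sE s a).
Proof.
apply/ffunP => i; rewrite !ffunE.
rewrite (reindex_inj (@perm_inj _ (s^-1)%g)) /=.
apply: eq_big => [k|k _]; last by rewrite ffunE.
by rewrite (inj_eq (@perm_inj _ _)).
Qed.

Definition embedI (F : fieldType) (h : 'I_3 -> 'M[F]_2) (s : 'S_3) (v : C0 F) : C0 F :=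
  (sE (s^-1)%g [ffun i => (h i u2 u2 * v.1 i - h i u1 u2 * v.2 i) / \det (h i)],
   sE (s^-1)%g [ffun i => (h i u1 u1 * v.2 i - h i u2 u1 * v.1 i) / \det (h i)]).

Lemma embed_bij (F : fieldType) (h : 'I_3 -> 'M[F]_2) (s : 'S_3) :
  (forall i, \det (h i) != 0) -> bijective (embed h s).
Proof.
move=> hd; exists (embedI h s) => [u|v].
  rewrite /embed /embedI /=; case: u => x y /=; congr (_, _).
    rewrite -[RHS](sEK s); congr (sE _ _); apply/ffunP => i; rewrite !ffunE.
    have := hd i; rewrite det2 => hi; field; exact: hi.
  rewrite -[RHS](sEK s); congr (sE _ _); apply/ffunP => i; rewrite !ffunE.
  have := hd i; rewrite det2 => hi; field; exact: hi.
rewrite /embed /embedI /= !sKE; case: v => x y /=; congr (_, _);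
  apply/ffunP => i; rewrite !ffunE; have := hd i; rewrite det2 => hi; field; exact: hi.
Qed.

Lemma embed_lin (F : fieldType) (h : 'I_3 -> 'M[F]_2) (s : 'S_3) c u v :
  embed h s (cadd (cscale c u) v) = cadd (cscale c (embed h s u)) (embed h s v).
Proof.
by rewrite /embed /cadd /cscale /=; congr (_, _); apply/ffunP => i; rewrite !ffunE; ring.
Qed.

Lemma embed_emul (F : fieldType) (h : 'I_3 -> 'M[F]_2) (s : 'S_3) a u :
  embed h s (emulC a u) = emulC (sE s a) (embed h s u).
Proof.
by rewrite /embed /emulC /emul /=; congr (_, _); apply/ffunP => i; rewrite !ffunE; ring.
Qed.

Section Spec.
Variable F : fieldType.
Variables (t : 'I_3 -> F) (e : bool) (h : 'I_3 -> 'M[F]_2).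
Hypothesis p : t ord0 * t o1 * t o2 = 1.
Hypothesis hh : forall i, h i = dmat (t i) *m (if e then wmat F else 1%:M).

Lemma tnz i : t i != 0.
Proof.
have : t ord0 * t o1 * t o2 != 0 by rewrite p oner_neq0.
by move=> /nz [/nz [h0 h1] h2]; case: (I3cases i) => ->.
Qed.

Lemma hdetnz i : \det (h i) != 0.
Proof.
rewrite hh det_mulmx det2; case: (dmatE (t i)) => -> -> -> ->.
rewrite mulr0 subr0 divff ?tnz // mul1r; case: (e); last by rewrite det1 oner_neq0.
by rewrite det2; case: (wmatE F) => -> -> -> ->; rewrite mul0r mulr1 sub0r oppr_eq0 oner_neq0.
Qed.

Lemma embed_Q0 s u : Q0 (embed h s u) = sE s (Q0 u).
Proof.
rewrite /Q0 sE_emul /embed /emul /=; apply/ffunP => i; rewrite !ffunE hh.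
case: (gmE (t i) e) => /= -> -> -> ->; have := tnz i.
by case: (e) => ti; field.
Qed.

Lemma embed_beta s u : embed h s (beta0 u) = beta0 (embed h s u).
Proof.
rewrite /beta0 /embed /= !sE_sharp.
set X := sE s u.1; set Y := sE s u.2.
have t0E : t ord0 = (t o1 * t o2)^-1.
  by apply: invE; rewrite mulrC mulrA.
have h1 := tnz o1; have h2 := tnz o2.
case: (gmE (t ord0) e) => /= a0 b0 c0 d0.
case: (gmE (t o1) e) => /= a1 b1 c1 d1.
case: (gmE (t o2) e) => /= a2 b2 c2 d2.
rewrite -!hh in a0 b0 c0 d0 a1 b1 c1 d1 a2 b2 c2 d2.
congr (_, _); apply/ffunP => i; rewrite !ffunE;
  case: (I3cases i) => ->; case: (prodE Y) => y0 y1 y2; case: (prodE X) => x0 x1 x2;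
  case: (prodE [ffun i0 => h i0 u1 u1 * X i0 + h i0 u1 u2 * Y i0]) => p0 p1 p2;
  case: (prodE [ffun i0 => h i0 u2 u1 * X i0 + h i0 u2 u2 * Y i0]) => q0 q1 q2;
  rewrite ?x0 ?x1 ?x2 ?y0 ?y1 ?y2 ?p0 ?p1 ?p2 ?q0 ?q1 ?q2;
  rewrite ?ffunE ?a0 ?b0 ?c0 ?d0 ?a1 ?b1 ?c1 ?d1 ?a2 ?b2 ?c2 ?d2 ?t0E.
  all: case: (e). all: by field; rewrite h1 h2 ?oner_neq0.
Qed.

Lemma embed_aut s : is_aut (embed h s) s.
Proof.
split.
- exact: embed_lin.
- apply: embed_bij; exact: hdetnz.
- exact: embed_emul.
- exact: embed_Q0.
- exact: embed_beta.
Qed.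
End Spec.

Lemma prod3 (F : fieldType) (t : 'I_3 -> F) : \prod_(i < 3) t i = t ord0 * t o1 * t o2.
Proof. by rewrite !big_ord_recr big_ord0 /= mul1r; congr (t _ * t _ * t _); apply: val_inj. Qed.

Lemma aut_ext (F : fieldType) (phi psi : C0 F -> C0 F) s :
  phi =1 psi -> is_aut psi s -> is_aut phi s.
Proof.
move=> he [l b m q bt]; split.
- by move=> c u v; rewrite !he.
- by apply: (eq_bij b) => u; rewrite he.
- by move=> a u; rewrite !he.
- by move=> u; rewrite he.
- by move=> u; rewrite !he.
Qed.

Lemma part3 (F : fieldType) (phi : C0 F -> C0 F) (s : 'S_3) :
  is_aut phi s <->
  exists2 h : 'I_3 -> 'M[F]_2, inM0 h /\ cube_tact h s (v0 F) = v0 F & phi =1 embed h s.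
Proof.
split; last first.
  move=> [h /part2 /part1 [t [e [p hh]]] he].
  rewrite prod3 in p.
  by apply: aut_ext he _; apply: (embed_aut p hh).
move=> [lin bij semi q bt].
pose one : E F := [ffun=> 1]; pose zero : E F := [ffun=> 0].
pose e1 : C0 F := (one, zero); pose e2 : C0 F := (zero, one).
have c1 (w : C0 F) : cscale 1 w = w.
  by case: w => x y; rewrite /cscale /=; congr (_, _); apply/ffunP => i; rewrite ffunE mul1r.
have add u v : phi (cadd u v) = cadd (phi u) (phi v).
  by rewrite -{1}(c1 u) lin c1.
have dec u : u = cadd (emulC u.1 e1) (emulC u.2 e2).
  case: u => x y; rewrite /cadd /emulC /emul /=; congr (_, _); apply/ffunP => i; rewrite !ffunE /=;
  by rewrite ?mulr1 ?mulr0 ?addr0 ?add0r.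
pose A1 := (phi e1).1; pose A2 := (phi e1).2; pose B1 := (phi e2).1; pose B2 := (phi e2).2.
pose h (i : 'I_3) : 'M[F]_2 := \matrix_(r, c) (if c == u1 then (if r == u1 then A1 i else A2 i)
                                               else (if r == u1 then B1 i else B2 i)).
have hE i : [/\ h i u1 u1 = A1 i, h i u1 u2 = B1 i, h i u2 u1 = A2 i & h i u2 u2 = B2 i].
  by rewrite !mxE.
have phiE : phi =1 embed h s.
  move=> u; rewrite {1}(dec u) add !semi /embed /cadd /emulC /emul /=.
  congr (_, _); apply/ffunP => i; rewrite !ffunE; case: (hE i) => k1 k2 k3 k4; rewrite ?k1 ?k2 ?k3 ?k4; rewrite /A1 /A2 /B1 /B2;
  by rewrite [X in X + _]mulrC [X in _ + X]mulrC.
have qA i : A1 i * A2 i = 0.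
  by have := congr1 (fun w : E F => w i) (q e1); rewrite /Q0 /emul !ffunE mulr0.
have qB i : B1 i * B2 i = 0.
  by have := congr1 (fun w : E F => w i) (q e2); rewrite /Q0 /emul !ffunE mul0r.
have qAB i : A1 i * B2 i + B1 i * A2 i = 1.
  have := congr1 (fun w : E F => w i) (q (cadd e1 e2)); rewrite add /Q0 /emul /cadd /= !ffunE.
  rewrite addr0 add0r mulr1 => H; rewrite -H -/(A1) -/(A2) -/(B1) -/(B2).
  have -> : (A1 i + B1 i) * (A2 i + B2 i) = A1 i * A2 i + (A1 i * B2 i + B1 i * A2 i) + B1 i * B2 i by ring.
  by rewrite qA qB add0r addr0.
have sh0 : sharp zero = zero.
  apply/ffunP => i; case: (sharpE zero) => k0 k1 k2; case: (I3cases i) => ->; by rewrite ?k0 ?k1 ?k2 !ffunE mulr0.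
have sh1 : sharp one = one.
  apply/ffunP => i; case: (sharpE one) => k0 k1 k2; case: (I3cases i) => ->; by rewrite ?k0 ?k1 ?k2 !ffunE mulr1.
have b1 : beta0 e1 = e2 by rewrite /beta0 /= sh0 sh1.
have b2 : beta0 e2 = e1 by rewrite /beta0 /= sh0 sh1.
have BA : B1 = sharp A2 /\ B2 = sharp A1 by rewrite /B1 /B2 -b1 bt.
have AB : A1 = sharp B2 /\ A2 = sharp B1 by rewrite /A1 /A2 -b2 bt.
case: BA => BA1 BA2; case: AB => AB1 AB2.
case: (sharpE A1) => sA0 sA1 sA2; case: (sharpE A2) => sC0 sC1 sC2.
case: (sharpE B1) => sB0 sB1 sB2; case: (sharpE B2) => sE0 sE1 sE2.
have Eb0 : B1 ord0 = A2 o1 * A2 o2 by rewrite BA1 sC0.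
have Eb1 : B1 o1 = A2 ord0 * A2 o2 by rewrite BA1 sC1.
have Eb2 : B1 o2 = A2 ord0 * A2 o1 by rewrite BA1 sC2.
have Ee0 : B2 ord0 = A1 o1 * A1 o2 by rewrite BA2 sA0.
have Ee1 : B2 o1 = A1 ord0 * A1 o2 by rewrite BA2 sA1.
have Ee2 : B2 o2 = A1 ord0 * A1 o1 by rewrite BA2 sA2.
have Ea0 : A1 ord0 = B2 o1 * B2 o2 by rewrite AB1 sE0.
have Ea1 : A1 o1 = B2 ord0 * B2 o2 by rewrite AB1 sE1.
have Ea2 : A1 o2 = B2 ord0 * B2 o1 by rewrite AB1 sE2.
have Ec0 : A2 ord0 = B1 o1 * B1 o2 by rewrite AB2 sB0.
have Ec1 : A2 o1 = B1 ord0 * B1 o2 by rewrite AB2 sB1.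
have Ec2 : A2 o2 = B1 ord0 * B1 o1 by rewrite AB2 sB2.
have hfin : forall (t : 'I_3 -> F) (e : bool), t ord0 * t o1 * t o2 = 1 ->
    (forall i, h i = dmat (t i) *m (if e then wmat F else 1%:M)) ->
    exists2 h0 : 'I_3 -> 'M[F]_2, inM0 h0 /\ cube_tact h0 s (v0 F) = v0 F & phi =1 embed h0 s.
  move=> t e p hh; exists h => //; apply/part2/part1; exists t, e; split => //; by rewrite prod3.
have [[z1 [z2 [z3 [z4 [z5 [z6 [p [i1 [i2 i3]]]]]]]]]|[z1 [z2 [z3 [z4 [z5 [z6 [p [i1 [i2 i3]]]]]]]]]] :=
  core2 (qA ord0) (qA o1) (qA o2) (qB ord0) (qB o1) (qB o2) (qAB ord0) (qAB o1) (qAB o2)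
        Eb0 Eb1 Eb2 Ee0 Ee1 Ee2 Ea0 Ea1 Ea2 Ec0 Ec1 Ec2.
- apply: (hfin A1 false p) => i; case: (gmE (A1 i) false) => /= g1 g2 g3 g4.
  case: (hE i) => h1 h2 h3 h4.
  apply: mx2_eq; rewrite ?g1 ?g2 ?g3 ?g4 ?h1 ?h2 ?h3 ?h4; by case: (I3cases i) => ->.
- apply: (hfin B1 true p) => i; case: (gmE (B1 i) true) => /= g1 g2 g3 g4.
  case: (hE i) => h1 h2 h3 h4.
  apply: mx2_eq; rewrite ?g1 ?g2 ?g3 ?g4 ?h1 ?h2 ?h3 ?h4; by case: (I3cases i) => ->.
Qed.

Theorem proposition6p1 (F : fieldType)
    (hF2 : (2%:R : F) != 0) (hF3 : (3%:R : F) != 0) :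
  (forall g : 'I_3 -> 'M[F]_2,
      (inM0 g /\ cube_gact g (v0 F) = v0 F) <->
      (exists t : 'I_3 -> F, exists e : bool,
          \prod_(i < 3) t i = 1 /\
          forall i, g i = dmat (t i) *m (if e then wmat F else 1%:M)))
  /\ (forall (g : 'I_3 -> 'M[F]_2) (s : 'S_3),
      (inM0 g /\ cube_tact g s (v0 F) = v0 F) <-> (inM0 g /\ cube_gact g (v0 F) = v0 F))
  /\ (forall (phi : C0 F -> C0 F) (s : 'S_3),
      is_aut phi s <->
      exists2 h : 'I_3 -> 'M[F]_2, inM0 h /\ cube_tact h s (v0 F) = v0 F
                                  & phi =1 embed h s).
Proof.
split; first exact: part1.
split; first exact: part2.
exact: part3.
Qed.
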